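(* Let $1\le k<n$ and let $P,Q\in\mathbb{H}_n$ be rank-$k$ orthogonal projections. Then $\operatorname{span}_{\mathbb{R}}S^{\mathbb{H}}(P)=\operatorname{span}_{\mathbb{R}}S^{\mathbb{H}}(Q)$ if and only if either $P=Q$, or $n=2k$ and $P=I-Q$.
   Context: $\mathbb{H}_n$ is the real space of $n\times n$ Hermitian matrices. $w_k(A)=\max\{|\operatorname{tr}(AP)|: P=P^*=P^2,\operatorname{tr}P=k\}$. For a rank-$k$ orthogonal projection $P$, $S^{\mathbb{H}}(P)=\{B\in\mathbb{H}_n:\operatorname{tr}(BP)=w_k(B)\}$. *)

(* Defs.v *)
From HB Require Import structures.
From mathcomp Require Import all_boot all_order all_algebra.
From mathcomp Require Import reals.
From mathcomp Require Import complex.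
Set Implicit Arguments.
Unset Strict Implicit.
Unset Printing Implicit Defensive.
Import Order.TTheory GRing.Theory Num.Theory.
Local Open Scope ring_scope.

Section Defs.
Variable R : realType.
Local Notation C := (complex R).

Definition adjmx (n : nat) (A : 'M[C]_n) : 'M[C]_n := (map_mx Num.conj A)^T.

Definition hermitian (n : nat) (A : 'M[C]_n) : Prop := adjmx A = A.

Definition rank_proj (n k : nat) (P : 'M[C]_n) : Prop :=
  adjmx P = P /\ P *m P = P /\ \tr P = k%:R.

Definition is_wk (n k : nat) (A : 'M[C]_n) (w : C) : Prop :=
  (exists P, rank_proj k P /\ `|\tr (A *m P)| = w) /\
  (forall P, rank_proj k P -> `|\tr (A *m P)| <= w).

Definition SH (n k : nat) (P : 'M[C]_n) (B : 'M[C]_n) : Prop :=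
  hermitian B /\ is_wk k B (\tr (B *m P)).

Definition rspan (n : nat) (S : 'M[C]_n -> Prop) (A : 'M[C]_n) : Prop :=
  exists (m : nat) (c : 'I_m -> R) (B : 'I_m -> 'M[C]_n),
    (forall i, S (B i)) /\ A = \sum_(i < m) (c i)%:C%C *: B i.
End Defs.

(* Main.v *)
Require Import Defs.
From HB Require Import structures.
From mathcomp Require Import all_boot all_order all_algebra.
From mathcomp Require Import reals.
From mathcomp Require Import complex ring lra.
From Stdlib Require Import Classical.
Import Order.TTheory GRing.Theory Num.Theory.
Local Open Scope ring_scope.
Set Implicit Arguments.
Unset Strict Implicit.
Unset Printing Implicit Defensive.

Section Aux.
Variable R : realType.
Local Notation C := (complex R).

Definition adj (m n : nat) (A : 'M[C]_(m, n)) : 'M[C]_(n, m) :=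
  (map_mx Num.conj A)^T.

Lemma adjE n (A : 'M[C]_n) : adjmx A = adj A. Proof. by []. Qed.

Lemma adjK m n (A : 'M[C]_(m, n)) : adj (adj A) = A.
Proof. by apply/matrixP=> i j; rewrite !mxE conjCK. Qed.

Lemma adjM m n p (A : 'M[C]_(m, n)) (B : 'M[C]_(n, p)) :
  adj (A *m B) = adj B *m adj A.
Proof.
apply/matrixP=> i j; rewrite !mxE rmorph_sum; apply: eq_bigr => l _.
by rewrite !mxE rmorphM mulrC.
Qed.

Lemma adjD m n (A B : 'M[C]_(m, n)) : adj (A + B) = adj A + adj B.
Proof. by apply/matrixP=> i j; rewrite !mxE rmorphD. Qed.

Lemma adjN m n (A : 'M[C]_(m, n)) : adj (- A) = - adj A.
Proof. by apply/matrixP=> i j; rewrite !mxE rmorphN. Qed.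

Lemma adjB m n (A B : 'M[C]_(m, n)) : adj (A - B) = adj A - adj B.
Proof. by rewrite adjD adjN. Qed.

Lemma adjZ m n c (A : 'M[C]_(m, n)) : adj (c *: A) = Num.conj c *: adj A.
Proof. by apply/matrixP=> i j; rewrite !mxE rmorphM. Qed.

Lemma adj_scalar n c : adj (c%:M : 'M[C]_n) = (Num.conj c)%:M.
Proof.
apply/matrixP=> i j; rewrite !mxE eq_sym; case: (i == j); last by rewrite !mulr0n rmorph0.
by rewrite !mulr1n.
Qed.

Lemma adj1 n : adj (1%:M : 'M[C]_n) = 1%:M.
Proof. by rewrite adj_scalar rmorph1. Qed.

Lemma adj0 m n : adj (0 : 'M[C]_(m, n)) = 0.
Proof. by apply/matrixP=> i j; rewrite !mxE rmorph0. Qed.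

Lemma tr_adj n (A : 'M[C]_n) : \tr (adj A) = Num.conj (\tr A).
Proof. rewrite /mxtrace rmorph_sum; apply: eq_bigr => i _; by rewrite !mxE. Qed.

Lemma mx11E (A : 'M[C]_1) : \tr A = A 0 0.
Proof. by rewrite /mxtrace big_ord1. Qed.

Lemma adj11 (A : 'M[C]_1) : adj A 0 0 = Num.conj (A 0 0).
Proof. by rewrite !mxE. Qed.

Lemma dot_ge0 n (x : 'cV[C]_n) : 0 <= (adj x *m x) 0 0.
Proof.
rewrite !mxE; apply: sumr_ge0 => i _; rewrite !mxE mulrC; exact: mul_conjC_ge0.
Qed.

Lemma dot_eq0 n (x : 'cV[C]_n) : (adj x *m x) 0 0 = 0 -> x = 0.
Proof.
rewrite !mxE => /eqP; rewrite psumr_eq0 => [/allP H|i _]; last first.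
  by rewrite !mxE mulrC mul_conjC_ge0.
apply/matrixP=> i j; rewrite (ord1 j) mxE.
have := H i (mem_index_enum _); rewrite !mxE mulrC mul_conjC_eq0.
by move/eqP.
Qed.

Lemma dot_conj n (x y : 'cV[C]_n) :
  Num.conj ((adj x *m y) 0 0) = (adj y *m x) 0 0.
Proof. by rewrite -adj11 adjM adjK. Qed.

Lemma dot_real n (x : 'cV[C]_n) : Num.conj ((adj x *m x) 0 0) = (adj x *m x) 0 0.
Proof. exact: dot_conj. Qed.

Lemma tr_rank1 n (x y : 'cV[C]_n) : \tr (x *m adj y) = (adj y *m x) 0 0.
Proof. by rewrite mxtrace_mulC mx11E. Qed.


Lemma real_ineq (a b p q N : R) : 0 < a -> 0 <= b -> 0 < N ->
  exists t : R, 0 < t /\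
   0 < - (p / a) + (p + 2 * t * N + t ^+ 2 * N * q) / (a + t ^+ 2 * N * b).
Proof.
move=> a0 b0 N0; set d := b * p - a * q.
have d0 : 0 < 1 + d ^+ 2 by have := sqr_ge0 d; lra.
exists (a / (1 + d ^+ 2)); split; first exact: divr_gt0.
set t := a / (1 + d ^+ 2).
have t0 : 0 < t by exact: divr_gt0.
have g1 : 0 <= t ^+ 2 * N * b.
  by rewrite mulr_ge0 // mulr_ge0 ?sqr_ge0 // ltW.
have g0 : 0 < a + t ^+ 2 * N * b by lra.
have E : - (p / a) + (p + 2 * t * N + t ^+ 2 * N * q) / (a + t ^+ 2 * N * b)
   = t * N * (2 * a - t * d) / (a * (a + t ^+ 2 * N * b)).
  rewrite /d; field; rewrite ?gt_eqF //; exact: mulr_gt0.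
have E2 : 2 * a - t * d = a * (2 * (1 + d ^+ 2) - d) / (1 + d ^+ 2).
  rewrite /t; field; rewrite gt_eqF //.
rewrite E; apply: divr_gt0; last exact: mulr_gt0.
apply: mulr_gt0; first exact: mulr_gt0.
rewrite E2; apply: divr_gt0 => //; apply: mulr_gt0 => //.
have := sqr_ge0 (d - 1); rewrite sqrrB; lra.
Qed.

Lemma projE n k (P : 'M[C]_n) : rank_proj k P ->
  [/\ adj P = P, P *m P = P & \tr P = k%:R].
Proof. by case=> ? [? ?]. Qed.

Lemma quad_adj n (P : 'M[C]_n) (x : 'cV[C]_n) : adj P = P -> P *m P = P ->
  adj x *m P *m x = adj (P *m x) *m (P *m x).
Proof. by move=> aP PP; rewrite adjM aP -!mulmxA (mulmxA P) PP. Qed.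

Lemma proj_quad n k (P : 'M[C]_n) (x : 'cV[C]_n) : rank_proj k P ->
  0 <= (adj x *m P *m x) 0 0 /\ (adj x *m P *m x) 0 0 <= (adj x *m x) 0 0.
Proof.
case/projE=> aP PP _; split; first by rewrite quad_adj // dot_ge0.
rewrite -subr_ge0.
have -> : (adj x *m x) 0 0 - (adj x *m P *m x) 0 0
    = (adj x *m (1%:M - P) *m x) 0 0.
  by rewrite mulmxBr mulmx1 mulmxBl !mxE.
rewrite quad_adj ?dot_ge0 // ?adjB ?adj1 ?aP //.
by rewrite mulmxBr mulmx1 mulmxBl mul1mx PP subrr subr0.
Qed.

Lemma tr_rank1M n (v : 'cV[C]_n) (M : 'M[C]_n) :
  \tr (v *m adj v *m M) = (adj v *m M *m v) 0 0.
Proof. by rewrite -mulmxA mxtrace_mulC mx11E. Qed.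

Lemma SH_rank1 n k (Q : 'M[C]_n) (v : 'cV[C]_n) :
  rank_proj k Q -> Q *m v = v -> SH k Q (v *m adj v).
Proof.
move=> rQ Qv; have [aQ QQ _] := projE rQ.
have trQ : \tr (v *m adj v *m Q) = (adj v *m v) 0 0.
  by rewrite tr_rank1M -mulmxA Qv.
split; first by rewrite /Defs.hermitian adjE adjM adjK.
split.
  by exists Q; split => //; rewrite trQ ger0_norm // dot_ge0.
move=> P' rP'; rewrite trQ tr_rank1M.
have [h1 h2] := proj_quad v rP'.
by rewrite ger0_norm.
Qed.

Lemma SH_corank1 n k (Q : 'M[C]_n) (w : 'cV[C]_n) : (1 <= k)%N ->
  rank_proj k Q -> Q *m w = 0 ->
  SH k Q (((1 + (adj w *m w) 0 0) %:M) - w *m adj w).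
Proof.
move=> k1 rQ Qw; have [aQ QQ trQ] := projE rQ.
set a := (adj w *m w) 0 0; set c := 1 + a.
have a0 : 0 <= a by exact: dot_ge0.
have trE : forall P' : 'M[C]_n, \tr P' = k%:R ->
    \tr ((c%:M - w *m adj w) *m P') = c * k%:R - (adj w *m P' *m w) 0 0.
  move=> P' tP'; rewrite mulmxBl mul_scalar_mx mxtraceD raddfN /= mxtraceZ tP'.
  by rewrite tr_rank1M.
have kge : 1 <= (k%:R : C) by rewrite ler1n.
have ck : c <= c * k%:R.
  by rewrite ler_peMr // /c addr_ge0.
have trQ' : \tr ((c%:M - w *m adj w) *m Q) = c * k%:R.
  by rewrite trE // -mulmxA Qw mulmx0 mxE subr0.
split.
  rewrite /Defs.hermitian adjE adjB adj_scalar adjM adjK rmorphD rmorph1.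
  by rewrite /c; congr (_%:M - _); congr (_ + _); exact: dot_real.
split.
  by exists Q; split => //; rewrite trQ' ger0_norm // mulr_ge0 ?ler0n // addr_ge0.
move=> P' rP'; have [_ _ tP'] := projE rP'.
rewrite trQ' trE //; have [h1 h2] := proj_quad w rP'.
rewrite ger0_norm ?gerBl // subr_ge0.
apply: le_trans h2 _; apply: le_trans ck; rewrite /c lerDr //.
Qed.

Lemma SH_one n k (Q : 'M[C]_n) : rank_proj k Q -> SH k Q 1%:M.
Proof.
move=> rQ; have [aQ QQ trQ] := projE rQ.
split; first by rewrite /Defs.hermitian adjE adj1.
split; first by exists Q; split => //; rewrite mul1mx trQ normr_nat.
by move=> P' rP'; have [_ _ tP'] := projE rP'; rewrite !mul1mx tP' trQ normr_nat.
Qed.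


Lemma entry11D (X Y : 'M[C]_1) : (X + Y) 0 0 = X 0 0 + Y 0 0.
Proof. by rewrite mxE. Qed.
Lemma entry11Z c (X : 'M[C]_1) : (c *: X) 0 0 = c * X 0 0.
Proof. by rewrite mxE. Qed.

Lemma expand_quad n (u v : 'cV[C]_n) (s : C) (M : 'M[C]_n) :
 (adj (u + s *: v) *m M *m (u + s *: v)) 0 0 =
   (adj u *m M *m u) 0 0 + s * (adj u *m M *m v) 0 0
   + Num.conj s * (adj v *m M *m u) 0 0
   + Num.conj s * s * (adj v *m M *m v) 0 0.
Proof.
rewrite adjD adjZ !mulmxDl !mulmxDr -!scalemxAl -!scalemxAr.
rewrite !entry11D !entry11Z; rewrite mulrA [s * _]mulrC; ring.
Qed.

Lemma quad_conj n (B : 'M[C]_n) (x y : 'cV[C]_n) : adj B = B ->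
  Num.conj ((adj x *m B *m y) 0 0) = (adj y *m B *m x) 0 0.
Proof. by move=> aB; rewrite -adj11 !adjM adjK aB mulmxA. Qed.

Lemma real_of (x : C) : Num.conj x = x -> x = ((complex.Re x)%:C)%C.
Proof. by move=> h; rewrite RRe_real //; apply/CrealP. Qed.


Lemma conjR (x : R) : Num.conj ((x%:C)%C : C) = (x%:C)%C.
Proof. exact: conjc_real. Qed.

Lemma idem_rank1 n (u : 'cV[C]_n) (al : C) : (adj u *m u) 0 0 = al -> al != 0 ->
  let E := al^-1 *: (u *m adj u) in E *m E = E.
Proof.
move=> hal al0 E; rewrite /E -scalemxAl -scalemxAr scalerA mulmxA.
rewrite -(mulmxA u) [adj u *m u]mx11_scalar hal mul_mx_scalar -scalemxAl scalerA.
by rewrite -mulrA mulVf // mulr1.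
Qed.

Lemma adj_rank1 n (u : 'cV[C]_n) (al : C) : Num.conj al = al ->
  adj (al^-1 *: (u *m adj u)) = al^-1 *: (u *m adj u).
Proof. by move=> h; rewrite adjZ adjM adjK fmorphV; congr (_^-1 *: _). Qed.

Lemma stationary n k (B P : 'M[C]_n) (u v : 'cV[C]_n) :
  adj B = B -> rank_proj k P ->
  (forall P', rank_proj k P' -> `|\tr (B *m P')| <= \tr (B *m P)) ->
  P *m u = u -> P *m v = 0 -> (adj u *m B *m v) 0 0 = 0.
Proof.
move=> aB rP Hm Pu Pv; have [aP PP tP] := projE rP.
have uv : adj u *m v = 0 by rewrite -Pu adjM aP -mulmxA Pv mulmx0.
have vu : adj v *m u = 0.
  by rewrite -(adjK (adj v *m u)) adjM adjK uv adj0.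
have uP : adj u *m P = adj u by rewrite -aP -adjM Pu.
case: (eqVneq u 0) => [->|u0]; first by rewrite adj0 !mul0mx mxE.
set al := (adj u *m u) 0 0.
have al0 : al != 0 by apply: contra u0 => /eqP/dot_eq0 ->.
apply/eqP; apply/negPn/negP => a0.
set a := (adj u *m B *m v) 0 0.
set N := a * Num.conj a.
set be := (adj v *m v) 0 0.
set p := (adj u *m B *m u) 0 0.
set q := (adj v *m B *m v) 0 0.
have ral : al = ((complex.Re al)%:C)%C := real_of (dot_real u).
have rbe : be = ((complex.Re be)%:C)%C := real_of (dot_real v).
have rp : p = ((complex.Re p)%:C)%C := real_of (quad_conj u u aB).
have rq : q = ((complex.Re q)%:C)%C := real_of (quad_conj v v aB).
have rN : Num.conj N = N by rewrite rmorphM /= conjCK mulrC.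
have rN' : N = ((complex.Re N)%:C)%C := real_of rN.
have ar0 : 0 < complex.Re al.
  rewrite -ltcR -ral lt_def al0 dot_ge0 //.
have br0 : 0 <= complex.Re be by rewrite -lecR -rbe dot_ge0.
have Nr0 : 0 < complex.Re N by rewrite -ltcR -rN' mul_conjC_gt0.
have [t [t0 Hexp]] := real_ineq (complex.Re p) (complex.Re q) ar0 br0 Nr0.
set s := (t%:C)%C * Num.conj a.
set w := u + s *: v.
set E := al^-1 *: (u *m adj u).
set ga := (adj w *m w) 0 0.
set F := ga^-1 *: (w *m adj w).
have z00 : (0 : 'M[C]_1) 0 0 = 0 by rewrite mxE.
have ss : Num.conj s * s = (t%:C)%C ^+ 2 * N.
  by rewrite /s rmorphM /= conjCK conjR /N; ring.
have ga_eq : ga = al + (t%:C)%C ^+ 2 * N * be.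
  have := expand_quad u v s 1%:M; rewrite !mulmx1 -/w -/ga => ->.
  by rewrite uv vu -/al -/be ss !z00 !mulr0 !addr0.
have W_eq : (adj w *m B *m w) 0 0 = p + 2 * (t%:C)%C * N + (t%:C)%C ^+ 2 * N * q.
  rewrite expand_quad -/p -/q ss -(quad_conj u v aB) -/a.
  by rewrite /s rmorphM /= conjCK conjR /N; ring.
have ral' : Num.conj al = al by exact: dot_real.
have Eadj : adj E = E by exact: adj_rank1.
have Fadj : adj F = F by apply: adj_rank1; exact: dot_real.
set ar := complex.Re al in ar0 ral Hexp.
set br := complex.Re be in br0 rbe Hexp.
set pr := complex.Re p in rp Hexp.
set qr := complex.Re q in rq Hexp.
set Nr := complex.Re N in Nr0 rN' Hexp.
have gaR : ga = ((ar + t ^+ 2 * Nr * br)%:C)%C.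
  by rewrite ga_eq ral rN' rbe !(rmorphD, rmorphM, rmorphXn) /=.
have gr0 : 0 < ar + t ^+ 2 * Nr * br.
  have h1 : 0 <= t ^+ 2 * Nr * br by rewrite mulr_ge0 // mulr_ge0 ?sqr_ge0 // ltW.
  lra.
have ga0 : ga != 0 by rewrite gaR; apply: contraTneq gr0 => /complexI ->; rewrite ltxx.
have EE : E *m E = E by exact: idem_rank1.
have FF : F *m F = F by exact: idem_rank1.
have PE : P *m E = E by rewrite /E scalemxAr mulmxA Pu.
have EP : E *m P = E by rewrite /E scalemxAl -mulmxA uP.
have Eu : E *m u = u.
  rewrite /E scalemxAl -mulmxA [adj u *m u]mx11_scalar -/al mul_mx_scalar.
  by rewrite scalerA mulfV // scale1r.
have Ev : E *m v = 0.
  by rewrite /E scalemxAl -mulmxA uv mulmx0.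
have Gw : (P - E) *m w = 0.
  rewrite /w mulmxDr mulmxBl Pu Eu subrr add0r -scalemxAr mulmxBl Pv Ev.
  by rewrite subrr scaler0.
have wG : adj w *m (P - E) = 0.
  by have := congr1 (@adj _ _) Gw; rewrite adjM adjB aP Eadj adj0.
have GF : (P - E) *m F = 0 by rewrite /F -scalemxAr mulmxA Gw mul0mx scaler0.
have FG : F *m (P - E) = 0 by rewrite /F -scalemxAl -mulmxA wG mulmx0 scaler0.
have GG : (P - E) *m (P - E) = P - E.
  by rewrite mulmxBl !mulmxBr PP PE EP EE subrr subr0.
have rP' : rank_proj k (P - E + F).
  split; first by rewrite adjE adjD adjB aP Eadj Fadj.
  split; first by rewrite mulmxDl (mulmxDr (P - E)) (mulmxDr F) GG GF FG FF addr0 add0r.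
  rewrite mxtraceD mxtraceD raddfN /= !mxtraceZ !tr_rank1 -/al -/ga !mulVf //.
  by rewrite tP subrK.
have trBE : forall (x : 'cV[C]_n) c, \tr (B *m (c *: (x *m adj x))) = c * (adj x *m B *m x) 0 0.
  by move=> x c; rewrite -scalemxAr mxtraceZ mulmxA tr_rank1 mulmxA.
have trBP' : \tr (B *m (P - E + F)) = \tr (B *m P) - al^-1 * p + ga^-1 * (adj w *m B *m w) 0 0.
  by rewrite mulmxDr mulmxBr mxtraceD mxtraceD raddfN /= trBE trBE.
have H := Hm _ rP'.
have T0 : 0 <= \tr (B *m P) by apply: le_trans H; exact: normr_ge0.
have HRe := le_trans (leif_Re_Creal (\tr (B *m (P - E + F)))).1 H.
set D := - (al^-1 * p) + ga^-1 * (adj w *m B *m w) 0 0.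
have Deq : D = ((- (pr / ar) + (pr + 2 * t * Nr + t ^+ 2 * Nr * qr)
                    / (ar + t ^+ 2 * Nr * br))%:C)%C.
  rewrite /D W_eq gaR ral rp rq rN'.
  rewrite !(rmorphD, rmorphN, rmorphM, fmorphV, rmorphXn, rmorph_nat) /=.
  rewrite [_^-1 * (pr%:C)%C]mulrC [(_ + _)^-1 * _]mulrC; congr (_ + (_ / (_ + _))); by rewrite expr2.
move: HRe; rewrite trBP' -addrA -/D raddfD /=.
have -> : 'Re (\tr (B *m P)) = \tr (B *m P) by apply/Creal_ReP; exact: ger0_real.
have -> : 'Re D = D by apply/Creal_ReP; rewrite Deq; apply/complex_realP; eexists.
rewrite gerDl Deq -(rmorph0 (real_complex R)) lecR.
by rewrite leNgt Hexp.
Qed.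


Lemma adj_delta n (i : 'I_n) : adj (delta_mx i (0 : 'I_1) : 'M[C]_(n, 1)) = delta_mx 0 i.
Proof.
apply/matrixP => a b; rewrite !mxE andbC; exact: conjC_nat.
Qed.

Lemma entry_delta n (A : 'M[C]_n) i j :
  ((delta_mx 0 i : 'M[C]_(1, n)) *m A *m (delta_mx j 0 : 'M[C]_(n, 1))) 0 0 = A i j.
Proof. by rewrite -rowE -colE !mxE. Qed.

Lemma SH_commute n k (P B : 'M[C]_n) : rank_proj k P -> SH k P B ->
  P *m B = B *m P.
Proof.
move=> rP [hB [_ Hm]]; have aB : adj B = B := hB.
have [aP PP tP] := projE rP.
have X0 : P *m B *m (1%:M - P) = 0.
  apply/matrixP => i j; rewrite [RHS]mxE -entry_delta.
  have := stationary aB rP Hm (u := P *m delta_mx i 0) (v := (1%:M - P) *m delta_mx j 0).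
  rewrite mulmxA PP mulmxA mulmxBr mulmx1 PP subrr mul0mx => /(_ erefl erefl).
  by rewrite adjM adj_delta aP !mulmxA.
have PBP : P *m B = P *m B *m P.
  by move/eqP: X0; rewrite mulmxBr mulmx1 subr_eq0 => /eqP.
have : adj (P *m B) = adj (P *m B *m P) by rewrite -PBP.
by rewrite !adjM aP aB => ->; rewrite mulmxA -PBP.
Qed.

Lemma rspan1 n (S : 'M[C]_n -> Prop) B : S B -> rspan S B.
Proof.
move=> SB; exists 1%N, (fun _ => 1), (fun _ => B); split => //.
by rewrite big_ord1 rmorph1 scale1r.
Qed.

Lemma rspan0 n (S : 'M[C]_n -> Prop) : rspan S 0.
Proof. by exists 0%N, (fun _ => 0), (fun _ => 0); split; [case | rewrite big_ord0]. Qed.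

Lemma rspanD n (S : 'M[C]_n -> Prop) X Y : rspan S X -> rspan S Y -> rspan S (X + Y).
Proof.
move=> [m1 [c1 [B1 [H1 ->]]]] [m2 [c2 [B2 [H2 ->]]]].
exists (m1 + m2)%N, (fun i => match split i with inl j => c1 j | inr j => c2 j end),
  (fun i => match split i with inl j => B1 j | inr j => B2 j end).
split; first by move=> i; case: (split i).
rewrite big_split_ord /=; congr (_ + _); apply: eq_bigr => i _.
  by rewrite (unsplitK (inl i)).
by rewrite (unsplitK (inr i)).
Qed.

Lemma rspanZ n (S : 'M[C]_n -> Prop) (r : R) X : rspan S X -> rspan S ((r%:C)%C *: X).
Proof.
move=> [m [c [B [H ->]]]]; exists m, (fun i => r * c i), B; split => //.
rewrite scaler_sumr; apply: eq_bigr => i _; by rewrite scalerA rmorphM.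
Qed.

Lemma rspan_mono n (S T : 'M[C]_n -> Prop) A :
  (forall B, S B -> rspan T B) -> rspan S A -> rspan T A.
Proof.
move=> HT [m [c [B [H ->]]]].
apply: (big_ind (rspan T)); [exact: rspan0 | exact: rspanD |].
by move=> i _; apply: rspanZ; apply: HT.
Qed.

Lemma rspan_commute n k (P A : 'M[C]_n) : rank_proj k P -> rspan (SH k P) A ->
  P *m A = A *m P.
Proof.
move=> rP [m [c [B [H ->]]]]; rewrite mulmx_sumr mulmx_suml.
apply: eq_bigr => i _; rewrite -scalemxAr -scalemxAl (SH_commute rP (H i)) //.
Qed.

Lemma eig01 n (P : 'M[C]_n) (v : 'cV[C]_n) : P *m P = P ->
  P *m (v *m adj v) = (v *m adj v) *m P -> P *m v = v \/ P *m v = 0.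
Proof.
move=> PP H; case: (eqVneq v 0) => [->|v0]; first by right; rewrite mulmx0.
set al := (adj v *m v) 0 0.
have al0 : al != 0 by apply: contra v0 => /eqP/dot_eq0 ->.
set c := (adj v *m (P *m v)) 0 0.
have h2 : al *: (P *m v) = c *: v.
  have := congr1 (mulmx^~ v) H; rewrite -!mulmxA [adj v *m v]mx11_scalar.
  rewrite [adj v *m (P *m v)]mx11_scalar !mul_mx_scalar -scalemxAr.
  by rewrite -/al -/c.
set lam := al^-1 * c.
have e1 : P *m v = lam *: v.
  by have := congr1 (fun x => al^-1 *: x) h2; rewrite !scalerA mulVf // scale1r.
have e2 : P *m (P *m v) = P *m v by rewrite mulmxA PP.
move: e2; rewrite e1 -scalemxAr e1 scalerA => /eqP.
rewrite -subr_eq0 -scalerBl scaler_eq0 (negPf v0) orbF.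
have -> : lam * lam - lam = lam * (lam - 1) by ring.
rewrite mulf_eq0 subr_eq0 => /orP [] /eqP ->.
  by right; rewrite scale0r.
by left; rewrite scale1r.
Qed.

Lemma no_mix n (P : 'M[C]_n) (S : 'cV[C]_n -> Prop) :
  (forall x y, S x -> S y -> S (x + y)) ->
  (forall x, S x -> P *m x = x \/ P *m x = 0) ->
  (forall x, S x -> P *m x = x) \/ (forall x, S x -> P *m x = 0).
Proof.
move=> Sadd H.
case: (classic (exists x, S x /\ P *m x <> 0)) => [[x [Sx nx]] | nex].
  left => y Sy.
  have Px : P *m x = x by case: (H x Sx).
  case: (H y Sy) => // Py0.
  case: (H (x + y) (Sadd _ _ Sx Sy)); rewrite mulmxDr Px Py0.
    rewrite addr0 => h; have y0 : y = 0 by apply: (@addrI _ x); rewrite addr0 -h.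
    by rewrite y0.
  by rewrite addr0 => x0; exfalso; apply: nx; rewrite Px.
right => y Sy; apply: NNPP => ny; apply: nex; by exists y.
Qed.

Lemma col_ext n (P M N : 'M[C]_n) :
  (forall j, P *m (M *m (delta_mx j 0 : 'M[C]_(n, 1))) = N *m delta_mx j 0) -> P *m M = N.
Proof.
move=> H; apply/matrixP => i j.
by move: (H j); rewrite mulmxA -!colE => /matrixP /(_ i 0); rewrite !mxE.
Qed.


Lemma rank_proj_compl n k (P : 'M[C]_n) : n = (2 * k)%N -> rank_proj k P ->
  rank_proj k (1%:M - P).
Proof.
move=> hn rP; have [aP PP tP] := projE rP.
split; first by rewrite adjE adjB adj1 aP.
split; first by rewrite mulmxBl mul1mx mulmxBr mulmx1 PP subrr subr0.
rewrite mxtraceD raddfN /= mxtrace1 tP hn mul2n -addnn natrD addrK //.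
Qed.

Lemma subKmx n (Q : 'M[C]_n) : 1%:M - (1%:M - Q) = Q.
Proof. by rewrite opprB addrC subrK. Qed.

Lemma SH_swap n k (Q B : 'M[C]_n) : n = (2 * k)%N -> (1 <= k)%N ->
  rank_proj k Q -> SH k Q B -> rspan (SH k (1%:M - Q)) B.
Proof.
move=> hn k1 rQ [hB [[P0 [rP0 eP0]] Hm]]; have aB : adj B = B := hB.
have rtB : Num.conj (\tr B) = \tr B by rewrite -tr_adj aB.
set c := complex.Re (\tr B) / (k%:R : R).
have k0 : (k%:R : R) != 0 by rewrite pnatr_eq0 -lt0n.
have ck : (c%:C)%C * k%:R = \tr B.
  rewrite [in RHS](real_of rtB) /c -(rmorph_nat (real_complex R)) -rmorphM /=.
  by rewrite divfK.
set Bt := ((c%:C)%C)%:M - B.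
have key : forall Q' : 'M[C]_n, \tr Q' = k%:R ->
    \tr (Bt *m Q') = \tr (B *m (1%:M - Q')).
  move=> Q' tQ'; rewrite /Bt mulmxBl mul_scalar_mx mulmxBr mulmx1.
  by rewrite !mxtraceD !raddfN /= mxtraceZ tQ' ck.
have rQc := rank_proj_compl hn rQ.
have SBt : SH k (1%:M - Q) Bt.
  split; first by rewrite /Defs.hermitian adjE /Bt adjB adj_scalar aB conjR.
  have [_ _ tQc] := projE rQc.
  rewrite key // subKmx; split.
    have rP0c := rank_proj_compl hn rP0; have [_ _ tP0c] := projE rP0c.
    by exists (1%:M - P0); split => //; rewrite key // subKmx.
  move=> P' rP'; have [_ _ tP'] := projE rP'.
  by rewrite key //; apply: Hm; exact: rank_proj_compl.
have -> : B = (c%:C)%C *: 1%:M + ((-1)%:C)%C *: Bt.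
  by rewrite scalemx1 rmorphN1 scaleN1r /Bt opprB addrC subrK.
apply: rspanD; apply: rspanZ; apply: rspan1 => //; exact: SH_one.
Qed.

End Aux.

Theorem mainTheorem10 (R : realType) (n k : nat) (P Q : 'M[complex R]_n) :
  (1 <= k)%N -> (k < n)%N ->
  rank_proj k P -> rank_proj k Q ->
  ((forall A, rspan (SH k P) A <-> rspan (SH k Q) A) <->
   (P = Q \/ (n = 2 * k)%N /\ P = 1%:M - Q)).
Proof.
move=> k1 kn rP rQ; have [aP PP tP] := projE rP; have [aQ QQ tQ] := projE rQ.
split; last first.
  case=> [<- //|[hn ->]] A; split; apply: rspan_mono => B hB.
    by have := SH_swap hn k1 (rank_proj_compl hn rQ) hB; rewrite subKmx.
  exact: SH_swap hn k1 rQ hB.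
move=> Hs.
have comm : forall X, SH k Q X -> P *m X = X *m P.
  by move=> X hX; apply: (rspan_commute rP); apply/Hs; apply: rspan1.
have HS1 : forall v : 'cV[complex R]_n, Q *m v = v -> P *m v = v \/ P *m v = 0.
  by move=> v hv; apply: eig01 => //; apply: comm; exact: SH_rank1.
have HS2 : forall w : 'cV[complex R]_n, Q *m w = 0 -> P *m w = w \/ P *m w = 0.
  move=> w hw; apply: eig01 => //.
  have := comm _ (SH_corank1 k1 rQ hw).
  rewrite mulmxBr mulmxBl mul_mx_scalar mul_scalar_mx => h.
  by apply: oppr_inj; apply: (@addrI _ ((1 + (adj w *m w) 0 0) *: P)).
have [A1|A1] := no_mix (fun x y (hx : Q *m x = x) (hy : Q *m y = y) =>
                  etrans (mulmxDr Q x y) (congr2 +%R hx hy)) HS1.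
all: have [A2|A2] := no_mix (S := fun w => Q *m w = 0)
        (fun x y (hx : Q *m x = 0) (hy : Q *m y = 0) =>
          etrans (mulmxDr Q x y) (etrans (congr2 +%R hx hy) (addr0 0))) HS2.
all: have decomp : P = P *m Q + P *m (1%:M - Q)
        by rewrite mulmxBr mulmx1 addrC subrK.
- have h1 : P *m Q = Q by apply: col_ext => j; apply: A1; rewrite mulmxA QQ.
  have h2 : P *m (1%:M - Q) = 1%:M - Q.
    by apply: col_ext => j; apply: A2; rewrite mulmxA mulmxBr mulmx1 QQ subrr mul0mx.
  move: tP; rewrite decomp h1 h2 addrC subrK mxtrace1 => /eqP; rewrite eqr_nat.
  by move/eqP => nk; rewrite nk ltnn in kn.
- have h1 : P *m Q = Q by apply: col_ext => j; apply: A1; rewrite mulmxA QQ.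
  have h2 : P *m (1%:M - Q) = 0.
    apply: col_ext => j; rewrite mul0mx; apply: A2.
    by rewrite mulmxA mulmxBr mulmx1 QQ subrr mul0mx.
  by left; rewrite decomp h1 h2 addr0.
- have h1 : P *m Q = 0.
    by apply: col_ext => j; rewrite mul0mx; apply: A1; rewrite mulmxA QQ.
  have h2 : P *m (1%:M - Q) = 1%:M - Q.
    by apply: col_ext => j; apply: A2; rewrite mulmxA mulmxBr mulmx1 QQ subrr mul0mx.
  have eP : P = 1%:M - Q by rewrite decomp h1 h2 add0r.
  right; split => //.
  move: tP; rewrite eP mxtraceD raddfN /= mxtrace1 tQ => /eqP.
  rewrite subr_eq -natrD eqr_nat => /eqP ->.
  by rewrite mul2n addnn.
- have h1 : P *m Q = 0.
    by apply: col_ext => j; rewrite mul0mx; apply: A1; rewrite mulmxA QQ.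
  have h2 : P *m (1%:M - Q) = 0.
    apply: col_ext => j; rewrite mul0mx; apply: A2.
    by rewrite mulmxA mulmxBr mulmx1 QQ subrr mul0mx.
  move: tP; rewrite decomp h1 h2 addr0 mxtrace0 => /eqP; rewrite eq_sym pnatr_eq0.
  by move/eqP => k0; rewrite k0 in k1.
Qed.
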